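(* Let $X_1,\dots,X_M$ be i.i.d. random variables taking values in $[k]$, let $\hat p_i=\frac1M\sum_{j=1}^M\mathbf{1}\{X_j=i\}$, and define $L(X_1,\dots,X_M)=\sum_{i=1}^k\hat p_i(1-\hat p_i)$. Then the function $L:[k]^M\to\mathbb{R}$ satisfies the bounded difference property with parameters $c_i=\frac2M$ for all $i\in[M]$, and consequently for every $t>0$, $$\mathbb{P}\left[|L(X_1,\dots,X_M)-\mathbb{E}[L(X_1,\dots,X_M)]|\ge t\right]\le 2\exp\left(-\frac{Mt^2}{2}\right).$$
   Context: A function $f:\mathcal{X}^M\to\mathbb{R}$ has the bounded difference property with parameters $c_1,\dots,c_M$ if for every $i\in[M]$, all $x_1,\dots,x_M,x_i'\in\mathcal{X}$, $|f(x_1,\dots,x_i,\dots,x_M)-f(x_1,\dots,x_i',\dots,x_M)|\le c_i$. *)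

(* Defs.v *)
From HB Require Import structures.
From mathcomp Require Import all_boot all_order all_algebra.
From mathcomp Require Import reals.
From mathcomp Require Import sequences.
Set Implicit Arguments. Unset Strict Implicit. Unset Printing Implicit Defensive.
Import Order.TTheory GRing.Theory Num.Theory.
Local Open Scope ring_scope.

Definition is_pmf (R : realType) (T : finType) (p : T -> R) : Prop :=
  (forall x, 0 <= p x) /\ \sum_(x : T) p x = 1.

Definition fupd (M : nat) (T : Type) (x : {ffun 'I_M -> T}) (i : 'I_M) (y : T)
  : {ffun 'I_M -> T} := [ffun j => if j == i then y else x j].

Definition bounded_difference (R : realType) (M : nat) (T : finType)
  (f : {ffun 'I_M -> T} -> R) (c : 'I_M -> R) : Prop :=
  forall (i : 'I_M) (x : {ffun 'I_M -> T}) (y : T),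
    `|f x - f (fupd x i y)| <= c i.

Definition phat (R : realType) (M k : nat) (x : {ffun 'I_M -> 'I_k}) (i : 'I_k) : R :=
  (#|[set j | x j == i]|)%:R / M%:R.

Definition Lfun (R : realType) (M k : nat) (x : {ffun 'I_M -> 'I_k}) : R :=
  \sum_(i < k) phat R x i * (1 - phat R x i).

(* Law of (X_1,...,X_M) i.i.d. with common pmf p: the product measure. *)
Definition iid_weight (R : realType) (M k : nat) (p : 'I_k -> R)
  (x : {ffun 'I_M -> 'I_k}) : R := \prod_(j < M) p (x j).

Definition iid_prob (R : realType) (M k : nat) (p : 'I_k -> R)
  (E : pred {ffun 'I_M -> 'I_k}) : R :=
  \sum_(x | E x) iid_weight p x.

Definition iid_expect (R : realType) (M k : nat) (p : 'I_k -> R)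
  (f : {ffun 'I_M -> 'I_k} -> R) : R :=
  \sum_(x : {ffun 'I_M -> 'I_k}) iid_weight p x * f x.

(* Main.v *)
Require Import Defs.
From HB Require Import structures.
From mathcomp Require Import all_boot all_order all_algebra.
From mathcomp Require Import reals.
From mathcomp Require Import sequences.
From mathcomp Require Import all_classical all_reals.
From mathcomp Require Import topology normedtype derive realfun exp.
From mathcomp Require Import ring lra.
Import Order.TTheory GRing.Theory Num.Theory.
Import numFieldNormedType.Exports.
Local Open Scope ring_scope.
Section S.
Variable R : realType.
Variable th : R.
Hypothesis th0 : 0 <= th.
Hypothesis th1 : th <= 1.
Definition D (u : R) := 1 - th + th * expR u.
Lemma D_gt0 u : 0 < D u.
Proof.
rewrite /D; have e0 := expR_gt0 u.
have [lt1|] := ltP th 1.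
  have : 0 <= th * expR u by rewrite mulr_ge0 // ltW.
  lra.
move=> ge1; have -> : th = 1 by apply/eqP; rewrite eq_le th1 ge1.
by rewrite subrr add0r mul1r.
Qed.
Lemma dD (x : R) : is_derive x (1:R) D (th * expR x).
Proof.
have -> : D = cst (1 - th) + th \*: expR by apply/funext => u.
apply: is_derive_eq.
by rewrite /= add0r.
Qed.
Definition h (u : R) := u / 4 + th - th * expR u / D u.
Definition h' (u : R) := 4^-1 - th * (1 - th) * expR u / (D u) ^+ 2.
Lemma dh (x : R) : is_derive x (1:R) h (h' x).
Proof.
have -> : h = (4^-1 \*: id) + cst th - (th \*: expR) * (fun u => (D u)^-1).
  by apply/funext => u; rewrite /h /= mulrC.
have Dn0 : D x != 0 by rewrite gt_eqF // D_gt0.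
have hV := is_deriveV Dn0 (dD x).
apply: is_derive_eq.
rewrite /h' /= /D.
have := D_gt0 x; rewrite /D => Dp.
set e := expR x.
rewrite /GRing.scale /=.
field.
by rewrite gt_eqF.
Qed.
Lemma h0 : h 0 = 0.
Proof. by rewrite /h /D expR0 mulr1 subrK divr1 mul0r add0r subrr. Qed.
Lemma h'_ge0 x : 0 <= h' x.
Proof.
rewrite /h'.
have Dp := D_gt0 x; have e0 := expR_gt0 x.
rewrite subr_ge0 ler_pdivrMr; last by rewrite exprn_gt0.
rewrite /D in Dp *; set e := expR x in Dp e0 *.
have : 0 <= (1 - th - th * e) ^+ 2 by apply: sqr_ge0.
nra.
Qed.
Lemma cont_of_der (f df : R -> R) a b :
  (forall x, is_derive x (1:R) f (df x)) -> {within `[a, b], continuous f}%classic.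
Proof.
move=> H; apply/continuous_subspaceT=> r.
apply/differentiable_continuous/derivable1_diffP.
by have [] := H r.
Qed.
Lemma h_ge0 u : 0 <= u -> 0 <= h u.
Proof.
move=> u0.
have [c _ E] := MVT_segment u0 (fun x _ => dh x) (cont_of_der _ _ _ _ dh).
suff : 0 <= h u - h 0 by rewrite h0 subr0.
by rewrite E mulr_ge0 // ?h'_ge0 // subr0.
Qed.
Lemma h_le0 u : u <= 0 -> h u <= 0.
Proof.
move=> u0.
have [c _ E] := MVT_segment u0 (fun x _ => dh x) (cont_of_der _ _ _ _ dh).
suff : 0 <= h 0 - h u by rewrite h0 sub0r oppr_ge0.
by rewrite E mulr_ge0 // ?h'_ge0 // subr_ge0.
Qed.
Definition psi (u : R) := th * u + u * u / 8 - ln (D u).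
Lemma dpsi (x : R) : is_derive x (1:R) psi (h x).
Proof.
have -> : psi = (th \*: id) + (8^-1 \*: (id * id)) - ((@ln R) \o D).
  by apply/funext => u; rewrite /psi /= [_ / 8]mulrC.
have := is_derive1_comp (is_derive1_ln (D_gt0 x)) (dD x) => dl.
apply: is_derive_eq.
rewrite /h /GRing.scale /=.
have Dp := D_gt0 x.
field.
by rewrite gt_eqF.
Qed.
Lemma psi0 : psi 0 = 0.
Proof. by rewrite /psi /D expR0 mulr1 subrK ln1 mulr0 !mul0r add0r subr0. Qed.
Lemma psi_ge0 u : 0 <= psi u.
Proof.
have [u0|u0] := leP 0 u.
  have [c /andP[c0 _] E] := MVT_segment u0 (fun x _ => dpsi x) (cont_of_der _ _ _ _ dpsi).
  suff : 0 <= psi u - psi 0 by rewrite psi0 subr0.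
  by rewrite E mulr_ge0 // ?h_ge0 // subr0.
have u0' := ltW u0.
have [c /andP[_ c0] E] := MVT_segment u0' (fun x _ => dpsi x) (cont_of_der _ _ _ _ dpsi).
have : psi 0 - psi u <= 0.
  rewrite E mulr_le0_ge0 // ?h_le0 // ?sub0r ?oppr_ge0 //; exact: ltW.
by rewrite psi0 sub0r oppr_le0.
Qed.
Lemma D_le u : D u <= expR (th * u + u * u / 8).
Proof.
have := psi_ge0 u; rewrite /psi subr_ge0 => H.
rewrite -(lnK (D_gt0 u)); by rewrite ler_expR.
Qed.
End S.
Section H.
Variable R : realType.
Lemma conv_exp (l a b y : R) : a <= y -> y <= b ->
  (b - a) * expR (l * y) <= (b - y) * expR (l * a) + (y - a) * expR (l * b).
Proof.
move=> ay yb.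
have h1 : expR (l * y) * (1 + l * (a - y)) <= expR (l * a).
  have -> : l * a = l * y + l * (a - y) by ring.
  by rewrite expRD ler_pM2l ?expR_gt0 // expR_ge1Dx.
have h2 : expR (l * y) * (1 + l * (b - y)) <= expR (l * b).
  have -> : l * b = l * y + l * (b - y) by ring.
  by rewrite expRD ler_pM2l ?expR_gt0 // expR_ge1Dx.
have p1 : 0 <= b - y by rewrite subr_ge0.
have p2 : 0 <= y - a by rewrite subr_ge0.

have q1 : 0 <= (b - y) * (expR (l * a) - expR (l * y) * (1 + l * (a - y))).
  by rewrite mulr_ge0 // subr_ge0.
have q2 : 0 <= (y - a) * (expR (l * b) - expR (l * y) * (1 + l * (b - y))).
  by rewrite mulr_ge0 // subr_ge0.
set E := expR (l * y) in q1 q2 *.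
nra.
Qed.

Lemma hoeffding (T : finType) (w Y : T -> R) (c l : R) :
  (forall t, 0 <= w t) -> \sum_t w t = 1 -> \sum_t w t * Y t = 0 ->
  (forall s t, Y s - Y t <= c) ->
  \sum_t w t * expR (l * Y t) <= expR (l ^+ 2 * c ^+ 2 / 8).
Proof.
move=> w0 w1 wY Yc.
have [t0 _] : exists t0 : T, True.
  have [t0 _|H] := pickP (fun _ : T => true); first by exists t0.
  by move: w1; rewrite big1 // => [/eqP|t _]; [rewrite eq_sym oner_eq0 | have := H t].
have [tm Hm] : exists tm, forall t, Y tm <= Y t.
  have := @arg_minP _ R T t0 xpredT Y isT.
  by case=> tm _ Hm; exists tm => t; apply: Hm.
set a := Y tm.
have aY t : a <= Y t by apply: Hm.
have c0 : 0 <= c by have := Yc t0 t0; rewrite subrr.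
have Yb t : Y t <= a + c by have := Yc t tm; rewrite lerBlDl addrC.
have a0 : a <= 0.
  have : 0 <= \sum_t w t * (Y t - a) by apply: sumr_ge0 => t _; rewrite mulr_ge0 // subr_ge0.
  under eq_bigr do rewrite mulrBr.
  by rewrite sumrB wY -mulr_suml w1 mul1r sub0r oppr_ge0.
have b0 : 0 <= a + c.
  have : 0 <= \sum_t w t * (a + c - Y t) by apply: sumr_ge0 => t _; rewrite mulr_ge0 // subr_ge0.
  under eq_bigr do rewrite mulrBr.
  by rewrite sumrB wY -mulr_suml w1 mul1r subr0.
have [c_eq0|cpos] := eqVneq c 0.
  have Y0 t : Y t = 0.
    have := aY t; have := Yb t; rewrite c_eq0 addr0 => H1 H2.
    have -> : Y t = a by apply/eqP; rewrite eq_le H1 H2.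
    by apply/eqP; rewrite eq_le a0; move: b0; rewrite c_eq0 addr0.
  under eq_bigr do rewrite Y0 mulr0 expR0 mulr1.
  by rewrite w1 c_eq0 expr0n /= mulr0 mul0r expR0.
have cp : 0 < c by rewrite lt_neqAle eq_sym cpos c0.
have step : \sum_t w t * expR (l * Y t) <=
    ((a + c) * expR (l * a) - a * expR (l * (a + c))) / c.
  rewrite ler_pdivlMr // mulr_suml.
  apply: (@le_trans _ _ (\sum_t w t * ((a + c - Y t) * expR (l * a) + (Y t - a) * expR (l * (a + c))))).
    apply: ler_sum => t _; rewrite -mulrA ler_wpM2l //.
    by have := conv_exp l a (a + c) (Y t) (aY t) (Yb t); rewrite addrAC subrr add0r mulrC.
  set Ea := expR (l * a); set Eb := expR (l * (a + c)).
  have E t : w t * ((a + c - Y t) * Ea + (Y t - a) * Eb) =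
     ((a + c) * Ea - a * Eb) * w t + (Eb - Ea) * (w t * Y t) by ring.
  under eq_bigr do rewrite E.
  by rewrite big_split /= -!mulr_sumr w1 wY mulr0 addr0 mulr1.
pose th := - a / c.
have th0 : 0 <= th by rewrite /th divr_ge0 // oppr_ge0.
have th1 : th <= 1 by rewrite /th ler_pdivrMr // mul1r; lra.
apply: (le_trans step).
have := @D_le R th th0 th1 (l * c).
rewrite /D => HD.
have la : l * a = - (th * (l * c)) by rewrite /th; field; rewrite gt_eqF.
have Eb : expR (l * (a + c)) = expR (l * a) * expR (l * c) by rewrite -expRD mulrDr.
have -> : ((a + c) * expR (l * a) - a * expR (l * (a + c))) / c
   = expR (l * a) * (1 - th + th * expR (l * c)).
  by rewrite Eb /th; field; rewrite gt_eqF.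
apply: (le_trans (ler_wpM2l (ltW (expR_gt0 _)) HD)).
rewrite -expRD la addrA addNr add0r ler_expR.
by rewrite !expr2; lra.
Qed.
End H.
Section Fupd.
Variables (M : nat) (T : Type).
Implicit Types (x : {ffun 'I_M -> T}).
Lemma fupdE x i y j : fupd x i y j = if j == i then y else x j.
Proof. by rewrite /fupd ffunE. Qed.
Lemma fupd_same x i y : fupd x i y i = y.
Proof. by rewrite fupdE eqxx. Qed.
Lemma fupd_id x i : fupd x i (x i) = x.
Proof. by apply/ffunP => j; rewrite fupdE; case: eqP => // ->. Qed.
Lemma fupd_fupd x i y z : fupd (fupd x i y) i z = fupd x i z.
Proof. by apply/ffunP => j; rewrite !fupdE; case: eqP. Qed.
Lemma fupdC x i j y z : i != j ->
  fupd (fupd x i y) j z = fupd (fupd x j z) i y.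
Proof.
move=> ij; apply/ffunP => l; rewrite !fupdE.
have [lj|lj] := eqVneq l j; have [li|li] := eqVneq l i => //.
by move: ij; rewrite -li lj eqxx.
Qed.
End Fupd.

Section Prod.
Variables (R : realType) (T : finType) (M : nat) (w : T -> R).
Hypothesis w0 : forall t, 0 <= w t.
Hypothesis w1 : \sum_t w t = 1.
Local Notation Om := {ffun 'I_M -> T}.
Definition W (x : Om) : R := \prod_j w (x j).
Definition Ex (f : Om -> R) : R := \sum_x W x * f x.
Definition Ej (j : 'I_M) (f : Om -> R) (x : Om) : R := \sum_y w y * f (fupd x j y).

Lemma W_ge0 x : 0 <= W x.
Proof. by apply: prodr_ge0 => j _. Qed.

Lemma W_sum : \sum_x W x = 1.
Proof.
rewrite /W -(bigA_distr_bigA (fun (_ : 'I_M) t => w t)) /=.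
by rewrite big1 // => j _.
Qed.

Lemma Ex_cst k : Ex (fun _ => k) = k.
Proof. by rewrite /Ex -mulr_suml W_sum mul1r. Qed.

Definition Wj (j : 'I_M) (x : Om) : R := \prod_(i | i != j) w (x i).

Lemma W_split j x : W x = w (x j) * Wj j x.
Proof. by rewrite /W (bigD1 j). Qed.

Lemma Wj_fupd j x y : Wj j (fupd x j y) = Wj j x.
Proof.
by apply: eq_bigr => i ij; rewrite fupdE (negbTE ij).
Qed.

Lemma tower j f : Ex (Ej j f) = Ex f.
Proof.
rewrite /Ex /Ej.
under eq_bigr do rewrite mulr_sumr.
rewrite pair_big /=.
pose phi (p : Om * T) := (fupd p.1 j p.2, p.1 j).
have phiK : involutive phi.
  by case=> x y; rewrite /phi /= fupd_fupd fupd_id fupd_same.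
rewrite (reindex_inj (inv_inj phiK)) /=.
rewrite /phi /=.
under eq_bigr => p _ do rewrite fupd_fupd fupd_id (W_split j) fupd_same Wj_fupd.
rewrite -(pair_big xpredT xpredT (fun x y => w y * Wj j x * (w (x j) * f x))).
apply: eq_bigr => x _.
rewrite (W_split j x).
rewrite -big_distrl -big_distrl /= w1 mul1r; ring.
Qed.

Lemma Ej_bd j f c : bounded_difference f c -> bounded_difference (Ej j f) c.
Proof.
move=> bd i x y.
rewrite /Ej -sumrB.
under eq_bigr do rewrite -mulrBr.
apply: (le_trans (ler_norm_sum _ _ _)).
have -> : c i = \sum_z w z * c i by rewrite -big_distrl /= w1 mul1r.
apply: ler_sum => z _.
rewrite normrM ger0_norm // ler_wpM2l //.
have [eij|ij] := eqVneq i j.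
  subst j; rewrite fupd_fupd subrr normr0.
  by have := bd i x (x i); rewrite fupd_id subrr normr0.
by rewrite fupdC //; exact: bd.
Qed.

Lemma step j f cj l : (forall x y, `|f x - f (fupd x j y)| <= cj) ->
  Ex (fun x => expR (l * f x)) <=
  expR (l ^+ 2 * cj ^+ 2 / 8) * Ex (fun x => expR (l * Ej j f x)).
Proof.
move=> bd.
rewrite -(tower j) /Ex mulr_sumr.
apply: ler_sum => x _.
rewrite mulrCA ler_wpM2l ?W_ge0 //.
rewrite /Ej.
set m := \sum_y w y * f (fupd x j y).
have -> : \sum_y w y * expR (l * f (fupd x j y)) =
   expR (l * m) * \sum_y w y * expR (l * (f (fupd x j y) - m)).
  rewrite mulr_sumr; apply: eq_bigr => y _.
  rewrite mulrCA -expRD; congr (_ * expR _); ring.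
rewrite [leRHS]mulrC ler_wpM2l ?expR_ge0 //.
apply: hoeffding => //.
  under eq_bigr do rewrite mulrBr.
  by rewrite sumrB -/m -big_distrl /= w1 mul1r subrr.
move=> s t.
have -> : f (fupd x j s) - m - (f (fupd x j t) - m) = f (fupd x j s) - f (fupd x j t) by ring.
apply: (le_trans (ler_norm _)).
by have := bd (fupd x j s) t; rewrite fupd_fupd.
Qed.

Definition Eseq (s : seq 'I_M) (f : Om -> R) := foldl (fun g j => Ej j g) f s.

Lemma iter s f c l : bounded_difference f c ->
  Ex (fun x => expR (l * f x)) <=
  expR (l ^+ 2 * (\sum_(j <- s) c j ^+ 2) / 8) * Ex (fun x => expR (l * Eseq s f x)).
Proof.
elim: s f => [|j s IH] f bd.
  by rewrite big_nil mulr0 mul0r expR0 mul1r.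
rewrite big_cons /=.
apply: (le_trans (step j f (c j) l (fun x y => bd j x y))).
apply: (le_trans (ler_wpM2l (expR_ge0 _) (IH _ (Ej_bd j f c bd)))).
have -> : l ^+ 2 * (c j ^+ 2 + \sum_(i <- s) c i ^+ 2) / 8 =
   l ^+ 2 * c j ^+ 2 / 8 + l ^+ 2 * (\sum_(i <- s) c i ^+ 2) / 8 by ring.
by rewrite expRD mulrA.
Qed.

Definition inv j (g : Om -> R) := forall x y, g (fupd x j y) = g x.

Lemma Ej_inv j g : inv j (Ej j g).
Proof. by move=> x y; rewrite /Ej; apply: eq_bigr => z _; rewrite fupd_fupd. Qed.

Lemma Ej_inv' i j g : inv i g -> inv i (Ej j g).
Proof.
move=> H x y.
have [eij|ij] := eqVneq i j; first by subst j; exact: Ej_inv.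
by rewrite /Ej; apply: eq_bigr => z _; rewrite fupdC // H.
Qed.

Lemma Eseq_pres s g j : inv j g -> inv j (Eseq s g).
Proof. by elim: s g => // i s IH g H /=; apply: IH; apply: Ej_inv'. Qed.

Lemma Eseq_inv s f j : j \in s -> inv j (Eseq s f).
Proof.
elim: s f => // i s IH f; rewrite inE => /orP[/eqP->|js] /=.
  by apply: Eseq_pres; exact: Ej_inv.
exact: IH.
Qed.

Lemma Eseq_Ex s f : Ex (Eseq s f) = Ex f.
Proof. by elim: s f => // j s IH f /=; rewrite IH tower. Qed.

Lemma inv_const g x x0 : (forall j, inv j g) -> g x = g x0.
Proof.
move=> Hg.
have H n : g x = g [ffun i : 'I_M => if (i < n)%N then x0 i else x i].
  elim: n => [|n IH].
    by congr g; apply/ffunP => i; rewrite ffunE ltn0.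
  rewrite IH; case: (ltnP n M) => [nM|Mn].
    have -> : [ffun i : 'I_M => if (i < n.+1)%N then x0 i else x i] =
      fupd [ffun i : 'I_M => if (i < n)%N then x0 i else x i] (Ordinal nM) (x0 (Ordinal nM)).
      apply/ffunP => i; rewrite fupdE !ffunE ltnS leq_eqVlt.
      have [->|ne] := eqVneq i (Ordinal nM); first by rewrite /= eqxx.
      have -> : (nat_of_ord i == n) = false.
        by apply/negbTE; move: ne; apply: contra => /eqP e; apply/eqP/val_inj.
      by [].
    by rewrite Hg.
  congr g; apply/ffunP => i; rewrite !ffunE.
  have iM := ltn_ord i.
  by rewrite (leq_trans iM Mn) (leq_trans iM (leq_trans Mn (leqnSn n))).
rewrite (H M); congr g; apply/ffunP => i; by rewrite ffunE ltn_ord.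
Qed.

Lemma mgf f c l : bounded_difference f c ->
  Ex (fun x => expR (l * (f x - Ex f))) <=
  expR (l ^+ 2 * (\sum_(j <- enum 'I_M) c j ^+ 2) / 8).
Proof.
move=> bd.
pose f' := fun x => f x - Ex f.
have bd' : bounded_difference f' c.
  move=> i x y; rewrite /f'.
  have -> : f x - Ex f - (f (fupd x i y) - Ex f) = f x - f (fupd x i y) by ring.
  exact: bd.
have := iter (enum 'I_M) f' c l bd'.
set g := Eseq (enum 'I_M) f'.
have [x0 _|Hn] := pickP (fun _ : Om => true); last first.
  move=> _; rewrite /Ex big1 ?expR_ge0 // => x _.
  by have := Hn x.
have gc x : g x = g x0 by apply: inv_const => j; apply: Eseq_inv; rewrite mem_enum.
have g0 : g x0 = 0.
  have : Ex g = Ex f' by rewrite Eseq_Ex.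
  rewrite /Ex.
  under eq_bigr do rewrite gc.
  rewrite -big_distrl /= W_sum mul1r => ->.
  rewrite /f'.
  under eq_bigr do rewrite mulrBr.
  by rewrite sumrB -big_distrl /= W_sum mul1r subrr.
have -> : Ex (fun x => expR (l * g x)) = 1.
  rewrite /Ex.
  under eq_bigr do rewrite gc g0 mulr0 expR0 mulr1.
  exact: W_sum.
by rewrite mulr1.
Qed.

Lemma tail f c t l : bounded_difference f c -> 0 <= l ->
  \sum_(x | t <= `|f x - Ex f|) W x <=
  2 * expR (- (l * t) + l ^+ 2 * (\sum_(j <- enum 'I_M) c j ^+ 2) / 8).
Proof.
move=> bd l0.
rewrite big_mkcond /=.
apply: (@le_trans _ _ (\sum_x W x * (expR (- (l * t)) *
   (expR (l * (f x - Ex f)) + expR ((- l) * (f x - Ex f)))))).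
  apply: ler_sum => x _; case: ifP => [H|_]; last first.
    by rewrite mulr_ge0 ?W_ge0 // mulr_ge0 ?expR_ge0 // addr_ge0 ?expR_ge0.
  rewrite -{1}[W x]mulr1 ler_wpM2l ?W_ge0 //.
  rewrite mulrDr -!expRD.
  set a := f x - Ex f in H *.
  have [a0|a0] := lerP 0 a.
    move: H; rewrite ger0_norm // => H.
    have : 1 <= expR (- (l * t) + l * a) by rewrite -expR0 ler_expR; nra.
    have := expR_ge0 (- (l * t) + - l * a); lra.
  move: H; rewrite ltr0_norm // => H.
  have : 1 <= expR (- (l * t) + - l * a) by rewrite -expR0 ler_expR; nra.
  have := expR_ge0 (- (l * t) + l * a); lra.
have -> : \sum_x W x * (expR (- (l * t)) *
   (expR (l * (f x - Ex f)) + expR ((- l) * (f x - Ex f)))) =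
   expR (- (l * t)) * (Ex (fun x => expR (l * (f x - Ex f))) +
                      Ex (fun x => expR ((- l) * (f x - Ex f)))).
  rewrite /Ex -big_split /= mulr_sumr; apply: eq_bigr => x _; ring.
rewrite expRD mulrCA ler_wpM2l ?expR_ge0 //.
have h1 := mgf f c l bd.
have h2 := mgf f c (- l) bd.
rewrite sqrrN in h2.
lra.
Qed.
End Prod.

Section Lbd.
Variables (R : realType) (M k : nat).
Hypothesis M0 : (0 < M)%N.
Local Notation Om := {ffun 'I_M -> 'I_k}.

Lemma cntE (x : Om) i :
  (#|[set j | x j == i]|)%:R = \sum_j ((x j == i)%:R : R).
Proof.
rewrite -sum1_card big_mkcond natr_sum; apply: eq_bigr => j _.
by rewrite inE; case: (x j == i).
Qed.

Lemma cnt_fupd (x : Om) j0 y i :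
  \sum_j ((fupd x j0 y j == i)%:R : R) =
  \sum_j ((x j == i)%:R : R) - (x j0 == i)%:R + (y == i)%:R.
Proof.
rewrite (bigD1 j0) //= [in RHS](bigD1 j0) //= fupd_same.
have -> : \sum_(j | j != j0) ((fupd x j0 y j == i)%:R : R) =
          \sum_(j | j != j0) ((x j == i)%:R : R).
  by apply: eq_bigr => j jn; rewrite fupdE (negbTE jn).
ring.
Qed.

Lemma sum_delta (a : 'I_k) : \sum_(i < k) ((a == i)%:R : R) = 1.
Proof.
rewrite (bigD1 a) //= eqxx big1 ?addr0 // => i ia.
by rewrite eq_sym (negbTE ia).
Qed.

Lemma phat01 (x : Om) i : 0 <= phat R x i <= 1.
Proof.
rewrite /phat divr_ge0 ?ler0n //= ler_pdivrMr ?ltr0n // mul1r ler_nat.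
by have := max_card (mem [set j | x j == i]); rewrite card_ord.
Qed.

Lemma L_bd : bounded_difference (@Lfun R M k) (fun _ => 2 / M%:R).
Proof.
move=> j0 x y.
rewrite /Lfun -sumrB.
apply: (le_trans (ler_norm_sum _ _ _)).
have Mp : (0 : R) < M%:R by rewrite ltr0n.
have -> : 2 / M%:R = \sum_(i < k) (((x j0 == i)%:R + (y == i)%:R) / (M%:R : R)).
  by rewrite -mulr_suml big_split /= !sum_delta.
apply: ler_sum => i _.
have E : phat R x i - phat R (fupd x j0 y) i = ((x j0 == i)%:R - (y == i)%:R) / M%:R.
  by rewrite /phat !cntE cnt_fupd; field; rewrite gt_eqF.
have := phat01 x i; have := phat01 (fupd x j0 y) i.
set q := phat R x i in E *; set q' := phat R (fupd x j0 y) i in E *.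
move=> /andP[q'0 q'1] /andP[q0 q1].
have -> : q * (1 - q) - q' * (1 - q') = (q - q') * (1 - q - q') by ring.
rewrite normrM E.
have n1 : `|1 - q - q'| <= 1 by rewrite ler_norml; apply/andP; split; lra.
apply: (le_trans (ler_wpM2l (normr_ge0 _) n1)); rewrite mulr1.
have Mi : 0 <= (M%:R : R)^-1 by rewrite invr_ge0 ltW.
rewrite normrM (ger0_norm Mi).
rewrite ler_wpM2r //.
apply: (le_trans (ler_normB _ _)).
by rewrite !ger0_norm ?ler0n.
Qed.
End Lbd.

Theorem lemma2 (R : realType) (k M : nat) (p : 'I_k -> R) :
  (0 < M)%N -> is_pmf p ->
  bounded_difference (@Lfun R M k) (fun _ => 2 / M%:R) /\
  (forall t : R, 0 < t ->
     iid_prob p (fun x : {ffun 'I_M -> 'I_k} => t <= `|Lfun R x - iid_expect p (@Lfun R M k)|)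
       <= 2 * expR (- (M%:R * t ^+ 2 / 2))).
Proof.
move=> M0 [p0 p1].
have bd := @L_bd R M k M0.
split => // t t0.
have Mp : (0 : R) < M%:R by rewrite ltr0n.
have H := @tail R _ M p p0 p1 (@Lfun R M k) _ t (t * M%:R) bd.
rewrite /iid_prob /iid_weight /iid_expect.
apply: le_trans (H _) _.
  by rewrite mulr_ge0 // ltW.
rewrite big_const_seq count_predT size_enum_ord iter_addr addr0 -[(_ ^+ 2) *+ M]mulr_natr.
rewrite ler_pM2l // ler_expR.
rewrite le_eqVlt; apply/orP; left; apply/eqP.
field; rewrite gt_eqF //.
Qed.
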